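(* Let $k$ be a field, $n\ge 1$, and let $Q_H$ be the quiver with vertices $x_1,\ldots,x_{n+1},y_1,\ldots,y_n$ and arrows $r_i:x_i\to y_i$, $l_i:y_i\to x_{i+1}$, $a_i:x_i\to x_{i+1}$ for $i=1,\ldots,n$. Put $m_{ij}=a_{i+1}\cdots a_{j-1}$ (for $0\le i<j$, with $m_{i,i+1}$ the stationary path at $x_{i+1}$), $A_i=r_il_i$, $T_i=A_ia_i^{-1}$ and $\alpha_i=m_{0i}T_im_{0i}^{-1}$, a closed walk at $x_1$. Let $1\le i<j\le n$ and let $I$ be an admissible ideal of $kQ_H$ in which $a_im_{ij}A_j+A_im_{ij}a_j$ is a minimal relation. Then $\tilde\alpha_i=\tilde\alpha_j$ in $\pi_1(Q_H,I,x_1)$.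
   Context: An ideal $I$ of $kQ$ is admissible if $F^m\subseteq I\subseteq F^2$ for some $m\ge2$, $F$ the arrow ideal. For vertices $x,y$, $I(x,y)=e_x(kQ)e_y\cap I$; a relation $\sum_{i=1}^{r}\lambda_i w_i\in I(x,y)$ ($\lambda_i\in k^*$, $w_i$ distinct paths $x\to y$) is minimal if $r\ge2$ and no proper nonempty subsum lies in $I(x,y)$. Walks are composable sequences of arrows and formal inverses $\alpha^{-1}$. Homotopy $\sim$ is the smallest equivalence relation on walks with $\alpha\alpha^{-1}\sim e_{s(\alpha)}$, $\alpha^{-1}\alpha\sim e_{t(\alpha)}$, $w_i\sim w_j$ for paths occurring in a common minimal relation of $I$, and $u\sim v\Rightarrow wuw'\sim wvw'$. $\pi_1(Q,I,x_1)$ is the group of homotopy classes $\tilde w$ of closed walks at $x_1$. *)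

(* Defs.v *)
From HB Require Import structures.
From mathcomp Require Import all_boot all_algebra.
Set Implicit Arguments. Unset Strict Implicit. Unset Printing Implicit Defensive.
Import GRing.Theory.
Local Open Scope ring_scope.

(* Generic quiver Q = (V, E, s, t).  Paths are written left to right:   *)
(* a raw path is (v, [e1; ...; em]) starting at v, valid when s e1 = v  *)
(* and t e_i = s e_(i+1).  (v, [::]) is the stationary path e_v.       *)
(* Elements of the path algebra kQ are coefficient functions on raw     *)
(* paths with finite support contained in the valid paths.             *)
Section Quiver.
Variables (k : fieldType) (V E : eqType) (s t : E -> V).

Definition rpath := (V * seq E)%type.

Fixpoint valid_from (v : V) (l : seq E) : bool :=
  if l is e :: l' then (s e == v) && valid_from (t e) l' else true.

Definition pvalid (p : rpath) : bool := valid_from p.1 p.2.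
Definition ptgt (p : rpath) : V := last p.1 (map t p.2).
Definition plen (p : rpath) : nat := size p.2.

Definition pvert (p : rpath) (i : nat) : V := last p.1 (map t (take i p.2)).

Definition kQelem (f : rpath -> k) : Prop :=
  (exists sp : seq rpath, forall p, f p != 0 -> p \in sp) /\
  (forall p, f p != 0 -> pvalid p).

(* multiplication of kQ (concatenation of paths, extended bilinearly) *)
Definition kQmul (f g : rpath -> k) : rpath -> k := fun p =>
  \sum_(i < (size p.2).+1) f (p.1, take i p.2) * g (pvert p i, drop i p.2).

Definition is_ideal (I : (rpath -> k) -> Prop) : Prop :=
  [/\ forall f, I f -> kQelem f,
      I (fun _ => 0),
      forall f g, I f -> I g -> I (fun p => f p + g p),
      forall (c : k) f, I f -> I (fun p => c * f p) &
      forall f g, kQelem g -> I f -> I (kQmul g f) /\ I (kQmul f g)].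

(* F^m : the span of the paths of length >= m (F the arrow ideal) *)
Definition inFpow (m : nat) (f : rpath -> k) : Prop :=
  kQelem f /\ forall p, f p != 0 -> (m <= plen p)%N.

Definition admissible (I : (rpath -> k) -> Prop) : Prop :=
  is_ideal I /\
  exists m : nat, (2 <= m)%N /\
    (forall f, inFpow m f -> I f) /\ (forall f, I f -> inFpow 2 f).

(* A minimal relation: f = sum_i lambda_i w_i in I(x,y), lambda_i <> 0,
   w_i distinct paths x -> y (the support of f), r >= 2, and no proper
   nonempty subsum lies in I (equivalently in I(x,y)). *)
Definition minimal_rel (I : (rpath -> k) -> Prop) (f : rpath -> k) : Prop :=
  [/\ I f,
      exists x y, forall p, f p != 0 -> p.1 = x /\ ptgt p = y,
      exists w1 w2, [/\ w1 != w2, f w1 != 0 & f w2 != 0] &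
      forall S : pred rpath,
        (exists p, S p /\ f p != 0) -> (exists p, ~~ S p /\ f p != 0) ->
        ~ I (fun p => if S p then f p else 0)].

(* Walks: (v, [steps]) with a step (e, false) = e and (e, true) = e^-1. *)
Definition walk := (V * seq (E * bool))%type.
Definition ssrc (st : E * bool) : V := if st.2 then t st.1 else s st.1.
Definition stgt (st : E * bool) : V := if st.2 then s st.1 else t st.1.

Fixpoint wvalid_from (v : V) (l : seq (E * bool)) : bool :=
  if l is st :: l' then (ssrc st == v) && wvalid_from (stgt st) l' else true.
Definition wvalid (w : walk) : bool := wvalid_from w.1 w.2.
Definition wend (w : walk) : V := last w.1 (map stgt w.2).

(* composition (concatenation) of walks, used when wend w = w'.1 *)
Definition wcat (w w' : walk) : walk := (w.1, w.2 ++ w'.2).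
Definition winv (w : walk) : walk :=
  (wend w, rev (map (fun st => (st.1, ~~ st.2)) w.2)).
Definition walk_of_path (p : rpath) : walk := (p.1, map (fun e => (e, false)) p.2).

Inductive htpy (I : (rpath -> k) -> Prop) : walk -> walk -> Prop :=
| htpy_refl w : htpy I w w
| htpy_sym u v : htpy I u v -> htpy I v u
| htpy_trans u v w : htpy I u v -> htpy I v w -> htpy I u w
| htpy_cancel_l (e : E) : htpy I (s e, [:: (e, false); (e, true)]) (s e, [::])
| htpy_cancel_r (e : E) : htpy I (t e, [:: (e, true); (e, false)]) (t e, [::])
| htpy_rel (f : rpath -> k) (p q : rpath) :
    minimal_rel I f -> f p != 0 -> f q != 0 ->
    htpy I (walk_of_path p) (walk_of_path q)
| htpy_cong (w u v w' : walk) :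
    htpy I u v -> wvalid w -> wvalid w' -> wend w = u.1 -> w'.1 = wend u ->
    htpy I (wcat w (wcat u w')) (wcat w (wcat v w')).

End Quiver.

(* The quiver Q_H with N = n.+1 (so N >= 1), indices 1-based as in the *)
(* paper: vertices x_1..x_(N+1) (inl), y_1..y_N (inr); arrows           *)
(* r_i (inl (inl _)), l_i (inl (inr _)), a_i (inr _).                   *)
Section QH.
Variable n : nat.

Definition QHV : eqType := ('I_n.+2 + 'I_n.+1)%type.
Definition QHE : eqType := (('I_n.+1 + 'I_n.+1) + 'I_n.+1)%type.

Definition xv (i : nat) : QHV := inl (inord i.-1).
Definition yv (i : nat) : QHV := inr (inord i.-1).
Definition rA (i : nat) : QHE := inl (inl (inord i.-1)).
Definition lA (i : nat) : QHE := inl (inr (inord i.-1)).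
Definition aA (i : nat) : QHE := inr (inord i.-1).

Definition QHs (e : QHE) : QHV :=
  match e with
  | inl (inl i) => inl (widen_ord (leqnSn _) i)   (* r_i : x_i -> y_i *)
  | inl (inr i) => inr i                          (* l_i : y_i -> x_(i+1) *)
  | inr i => inl (widen_ord (leqnSn _) i)         (* a_i : x_i -> x_(i+1) *)
  end.
Definition QHt (e : QHE) : QHV :=
  match e with
  | inl (inl i) => inr i
  | inl (inr i) => inl (lift ord0 i)
  | inr i => inl (lift ord0 i)
  end.

(* m_(ij) = a_(i+1) ... a_(j-1), a path x_(i+1) -> x_j (0 <= i < j) *)
Definition m_list (i j : nat) : seq QHE := [seq aA q | q <- iota i.+1 (j - i.+1)].
Definition m_path (i j : nat) : rpath QHV QHE := (xv i.+1, m_list i j).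

Definition A_path (i : nat) : rpath QHV QHE := (xv i, [:: rA i; lA i]).

Definition T_walk (i : nat) : walk QHV QHE :=
  (xv i, [:: (rA i, false); (lA i, false); (aA i, true)]).

Definition alpha (i : nat) : walk QHV QHE :=
  let m := walk_of_path (m_path 0 i) in
  wcat m (wcat (T_walk i) (winv QHs QHt m)).

Definition rel_path1 (i j : nat) : rpath QHV QHE :=
  (xv i, aA i :: m_list i j ++ [:: rA j; lA j]).
Definition rel_path2 (i j : nat) : rpath QHV QHE :=
  (xv i, [:: rA i; lA i] ++ m_list i j ++ [:: aA j]).

Definition rel_elem (k : fieldType) (i j : nat) : rpath QHV QHE -> k :=
  fun p => (p == rel_path1 i j)%:R + (p == rel_path2 i j)%:R.

End QH.

(* Main.v *)
Require Import Defs.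
From mathcomp Require Import all_boot all_algebra zify.
Set Implicit Arguments. Unset Strict Implicit.
Import GRing.Theory.

Section Gen.
Variables (k : fieldType) (V E : eqType) (s t : E -> V).
Variable I : (rpath V E -> k) -> Prop.

Definition fl (st : E * bool) : E * bool := (st.1, ~~ st.2).
Definition winvl (l : seq (E * bool)) := rev (map (fun st => (st.1, ~~ st.2)) l).

Lemma wvalid_cons v st l : wvalid_from s t v (st :: l) =
  (ssrc s t st == v) && wvalid_from s t (stgt s t st) l.
Proof. by []. Qed.
Lemma ssrcF e : ssrc s t (e, false) = s e. Proof. by []. Qed.
Lemma stgtF e : stgt s t (e, false) = t e. Proof. by []. Qed.
Lemma ssrcT e : ssrc s t (e, true) = t e. Proof. by []. Qed.
Lemma stgtT e : stgt s t (e, true) = s e. Proof. by []. Qed.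

Lemma wvalid_cat v l1 l2 : wvalid_from s t v (l1 ++ l2) =
  wvalid_from s t v l1 && wvalid_from s t (last v (map (stgt s t) l1)) l2.
Proof. by elim: l1 v => //= st l IH v; rewrite IH andbA. Qed.

Lemma winvl_cons st l : winvl (st :: l) = winvl l ++ [:: fl st].
Proof. by rewrite /winvl /= rev_cons cats1. Qed.

Lemma winvl_cat l1 l2 : winvl (l1 ++ l2) = winvl l2 ++ winvl l1.
Proof. by rewrite /winvl map_cat rev_cat. Qed.

Lemma winvl_valid l v : wvalid_from s t v l ->
  wvalid_from s t (last v (map (stgt s t) l)) (winvl l) /\
  last (last v (map (stgt s t) l)) (map (stgt s t) (winvl l)) = v.
Proof.
elim: l v => [|st l IH] v //=.
move=> /andP[/eqP hs hl]; have [h1 h2] := IH _ hl.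
rewrite winvl_cons wvalid_cat map_cat last_cat h1 h2 /=.
clear hl IH h1 h2; case: st hs => e [] hs; rewrite /= ?eqxx /=; by rewrite -hs.

Qed.

Lemma htpy_eq u u' v v' : u = u' -> v = v' -> htpy s t I u' v' -> htpy s t I u v.
Proof. by move=> -> ->. Qed.

Lemma cancel_walk w0 l : forall l1 l2,
  wvalid_from s t w0 l1 ->
  wvalid_from s t (last w0 (map (stgt s t) l1)) l ->
  wvalid_from s t (last w0 (map (stgt s t) l1)) l2 ->
  htpy s t I (w0, l1 ++ l ++ winvl l ++ l2) (w0, l1 ++ l2).
Proof.
elim: l => [|st l IH] l1 l2 h1 hl h2 /=; first exact: htpy_refl.
move: hl => /= /andP[/eqP hs hl].
set v := last w0 (map (stgt s t) l1) in hs h2 *.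
apply: (htpy_trans (v := (w0, l1 ++ ([:: st; fl st] ++ l2)))).
  apply: (htpy_eq (u' := (w0, (l1 ++ [:: st]) ++ l ++ winvl l ++ (fl st :: l2)))
     (v' := (w0, (l1 ++ [:: st]) ++ (fl st :: l2)))).
  - by rewrite winvl_cons -!catA.
  - by rewrite -!catA.
  apply: IH.
  - by rewrite wvalid_cat h1 /= hs eqxx.
  - by rewrite map_cat last_cat.
  - rewrite map_cat last_cat /=.
    clear hl; case: st hs => e [] hs; rewrite /= ?eqxx /=; move: hs; rewrite /ssrc /stgt /= => hs; by rewrite hs.
clear hl; have := @htpy_cong k V E s t I (w0, l1) (ssrc s t st, [:: st; fl st])
   (ssrc s t st, [::]) (v, l2).
rewrite /wcat /= => H; apply: H => //.
- by case: st hs => e [] /= _; [apply: htpy_cancel_r | apply: htpy_cancel_l].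
all: by case: st hs => e [] hs; rewrite /wend /= -?hs.
Qed.
End Gen.

Arguments aA : simpl never.
Arguments rA : simpl never.
Arguments lA : simpl never.
Arguments xv : simpl never.
Section Q.
Variable n : nat.

Lemma ordv q : (1 <= q <= n.+1)%N ->
  (widen_ord (leqnSn _) (inord q.-1 : 'I_n.+1) = inord q.-1 :> 'I_n.+2) /\
  (lift ord0 (inord q.-1 : 'I_n.+1) = inord q :> 'I_n.+2).
Proof.
case: q => //= q h; split; apply/val_inj => /=;
  rewrite /bump /= ?add1n !inordK //; apply: (leq_trans h); exact: leqnSn.
Qed.

Lemma sA q : (1 <= q <= n.+1)%N -> QHs (aA n q) = xv n q.
Proof. by move=> /ordv [h _]; rewrite /= h. Qed.
Lemma tA q : (1 <= q <= n.+1)%N -> QHt (aA n q) = xv n q.+1.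
Proof. by move=> /ordv [_ h]; rewrite /= h. Qed.
Lemma sR q : (1 <= q <= n.+1)%N -> QHs (rA n q) = xv n q.
Proof. by move=> /ordv [h _]; rewrite /= h. Qed.
Lemma tL q : (1 <= q <= n.+1)%N -> QHt (lA n q) = xv n q.+1.
Proof. by move=> /ordv [_ h]; rewrite /= h. Qed.

Definition fwd (l : seq (QHE n)) := map (fun e => (e, false)) l.

Lemma fwd_cons e l : fwd (e :: l) = (e, false) :: fwd l. Proof. by []. Qed.

Lemma fwd_cat l1 l2 : fwd (l1 ++ l2) = fwd l1 ++ fwd l2.
Proof. exact: map_cat. Qed.
Lemma sLtR q : QHs (lA n q) = QHt (rA n q). Proof. by []. Qed.

Lemma mvalid d : forall c, (1 <= c)%N -> (c + d <= n.+2)%N ->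
  wvalid_from (@QHs n) (@QHt n) (xv n c) (fwd (map (aA n) (iota c d))) /\
  last (xv n c) (map (stgt (@QHs n) (@QHt n)) (fwd (map (aA n) (iota c d)))) = xv n (c + d).
Proof.
elim: d => [|d IH] c h1 h2; first by rewrite addn0.
have Hc : (1 <= c <= n.+1)%N by rewrite h1 /=; rewrite addnS in h2; exact: leq_trans (leq_addr _ _) h2.
have := IH c.+1 isT; rewrite addSn -addnS => /(_ h2) [v1 v2].
by rewrite -[iota c d.+1]/(c :: iota c.+1 d) map_cons fwd_cons wvalid_cons ssrcF stgtF map_cons last_cons stgtF sA // tA // eqxx v1 v2.
Qed.
End Q.

Lemma mlist_split n i j : (1 <= i)%N -> (i < j)%N ->
  m_list n 0 j = m_list n 0 i ++ aA n i :: m_list n i j.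
Proof.
move=> hi hij; rewrite /m_list.
have -> : (j - 1 = (i - 1) + (j - i.+1).+1)%N by lia.
by rewrite iotaD map_cat /= (_ : (1 + (i - 1) = i)%N) //; lia.
Qed.

Theorem mainTheorem4 (k : fieldType) (n : nat) (i j : nat)
  (hi : (1 <= i)%N) (hij : (i < j)%N) (hj : (j <= n.+1)%N)
  (I : (rpath (QHV n) (QHE n) -> k) -> Prop) :
  admissible (@QHs n) (@QHt n) I ->
  minimal_rel (@QHt n) I (@rel_elem n k i j) ->
  htpy (@QHs n) (@QHt n) I (alpha n i) (alpha n j).
Proof.
move=> _ Hrel.
have HI : (1 <= i <= n.+1)%N by apply/andP; split; lia.
have HJ : (1 <= j <= n.+1)%N by apply/andP; split; lia.
have [vP eP] := @mvalid n (i - 1) 1 isT (ltac:(lia)).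
have [vM eM] := @mvalid n (j - i.+1) i.+1 isT (ltac:(lia)).
rewrite (_ : (1 + (i - 1) = i)%N) in vP eP; last by lia.
rewrite (_ : (i.+1 + (j - i.+1) = j)%N) in vM eM; last by lia.
rewrite -/(m_list n 0 i) in vP eP. rewrite -/(m_list n i j) in vM eM.
set P := fwd (m_list n 0 i) in vP eP *.
set M := fwd (m_list n i j) in vM eM *.
have [ivP ieP] := winvl_valid vP. rewrite eP in ivP ieP.
have [ivM ieM] := winvl_valid vM. rewrite eM in ivM ieM.
have aJ : alpha n j = (xv n 1, P ++ (fwd (aA n i :: m_list n i j ++ [:: rA n j; lA n j]) ++
   ((aA n j, true) :: winvl M ++ (aA n i, true) :: winvl P))).
  rewrite (_ : alpha n j = (xv n 1, fwd (m_list n 0 j) ++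
     ([:: (rA n j, false); (lA n j, false); (aA n j, true)] ++ winvl (fwd (m_list n 0 j))))) //.
  rewrite (mlist_split n hi hij) fwd_cat fwd_cons winvl_cat winvl_cons fwd_cons fwd_cat.
  by rewrite /fl /= -!catA.
have aI : alpha n i = (xv n 1, (P ++ [:: (rA n i, false); (lA n i, false)]) ++ ((aA n i, true) :: winvl P)).
  by rewrite -catA.
have ne : (rel_path1 n i j == rel_path2 n i j) = false.
  apply/negbTE/eqP => -[]; rewrite /aA /rA => H; discriminate H.
have hA := @htpy_cong k _ _ (@QHs n) (@QHt n) I (xv n 1, P)
  (walk_of_path (rel_path1 n i j)) (walk_of_path (rel_path2 n i j))
  (xv n j.+1, (aA n j, true) :: winvl M ++ (aA n i, true) :: winvl P).
have {hA} hA := hA _ vP.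
have hr : htpy (@QHs n) (@QHt n) I (walk_of_path (rel_path1 n i j)) (walk_of_path (rel_path2 n i j)).
  apply: (@htpy_rel _ _ _ _ _ _ _ _ _ Hrel); rewrite /rel_elem eqxx; [rewrite ne addr0 | rewrite (eq_sym (rel_path2 n i j)) ne add0r]; by rewrite /= mulr1n oner_eq0.
have {hr hA} hA := hA hr.
have hw' : wvalid (@QHs n) (@QHt n) (xv n j.+1, (aA n j, true) :: winvl M ++ (aA n i, true) :: winvl P).
  rewrite /wvalid [(_, _).1]/= [(_, _).2]/= wvalid_cons ssrcT stgtT tA // sA // eqxx /=.
  by rewrite wvalid_cat ivM ieM wvalid_cons ssrcT stgtT tA // sA // eqxx ivP.
have {hw' hA} hA := hA hw'.
have he1 : wend (@QHs n) (@QHt n) (xv n 1, P) = (walk_of_path (rel_path1 n i j)).1.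
  by rewrite /wend [(_, _).1]/= [(_, _).2]/= eP.
have {he1 hA} hA := hA he1.
have he2 : (xv n j.+1) = wend (@QHs n) (@QHt n) (walk_of_path (rel_path1 n i j)).
  rewrite /wend /walk_of_path /rel_path1 [(_, _).1]/= [(_, _).2]/=.
  by rewrite map_cons !map_cat last_cons last_cat /= stgtF tL.
have {he2 hA} hA := hA he2.
apply: htpy_sym; rewrite aJ.
apply: (htpy_trans (v := (xv n 1, (P ++ [:: (rA n i,false); (lA n i,false)]) ++
  (M ++ [:: (aA n j,false)]) ++ winvl (M ++ [:: (aA n j,false)]) ++ ((aA n i,true) :: winvl P)))).
  apply: htpy_eq hA; first by [].
  rewrite /wcat /walk_of_path /rel_path2 [(_, _).1]/= [(_, _).2]/= -/(fwd _) winvl_cat winvl_cons.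
  by rewrite /= fwd_cat /fl /= -!catA.
have hl1 : last (xv n 1) (map (stgt (@QHs n) (@QHt n)) (P ++ [:: (rA n i, false); (lA n i, false)])) = xv n i.+1.
  by rewrite map_cat last_cat eP /= ?stgtF tL.
rewrite aI; apply: cancel_walk; rewrite ?hl1.
- by rewrite wvalid_cat vP eP wvalid_cons ssrcF stgtF sR // eqxx wvalid_cons ssrcF sLtR eqxx.
- by rewrite wvalid_cat vM eM wvalid_cons ssrcF sA // eqxx.
- by rewrite wvalid_cons ssrcT tA // eqxx stgtT sA // ivP.
Qed.
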